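(* Let $d\geq 2$ and $N\geq1$ be integers and let $A\in\mathbb{Z}_{\geq0}^{N\times d}$ be an $(N,d)$-complete consecutive integers matrix. Then $$a_d(\lfloor\log_d N\rfloor)\leq\beta(A)\leq\gamma(A)\leq a_d(\lceil\log_d N\rceil),$$ where $a_d(k)=d+\sum_{i=0}^{d-1}\sum_{j=1}^{k} i\cdot d^{j-1}$. In particular, underestimating $\beta(A)$ by $a_d(\lfloor\log_d N\rfloor)$ and overestimating $\gamma(A)$ by $a_d(\lceil\log_d N\rceil)$ incurs an additive error of at most $\sum_{i=0}^{d-1} i\cdot d^{\lceil\log_d N\rceil-1}$.
   Context: For $A\in\mathbb{R}^{m\times d}$ and $\Pi=(\pi_1,\dots,\pi_d)\in\mathfrak{S}(m)^d$ (where $\mathfrak{S}(m)$ is the symmetric group on $\{1,\dots,m\}$), $A^\Pi$ denotes the matrix with $A^\Pi_{i,j}=A_{\pi_j^{-1}(i),j}$. Define $\gamma(A)=\min_{\Pi}\max_{i}\sum_{j=1}^d A^\Pi_{i,j}$ and $\beta(A)=\max_{\Pi}\min_{i}\sum_{j=1}^d A^\Pi_{i,j}$. For $d,N\in\mathbb{Z}_{\geq0}$ let $a=(1,\dots,N)^\top$; any matrix $A^\Pi$ obtained from $(a,\dots,a)\in\mathbb{Z}^{N\times d}$ by permutations $\Pi\in\mathfrak{S}(N)^d$ of the columns' entries is called an $(N,d)$-complete consecutive integers matrix. *)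

(* Defs.v *)
From mathcomp Require Import all_boot all_order all_algebra all_fingroup.
Set Implicit Arguments. Unset Strict Implicit. Unset Printing Implicit Defensive.

Definition permcols m d (A : 'M[nat]_(m, d)) (Pi : {ffun 'I_d -> {perm 'I_m}})
  : 'M[nat]_(m, d) := \matrix_(i, j) A (((Pi j)^-1)%g i) j.

Definition rowsum m d (A : 'M[nat]_(m, d)) (i : 'I_m) : nat := \sum_(j < d) A i j.

Definition maxrow m d (A : 'M[nat]_(m, d)) : nat := \max_(i < m) rowsum A i.

(* min over rows; the seed maxrow A dominates every row sum, so for m >= 1
   this is the true minimum *)
Definition minrow m d (A : 'M[nat]_(m, d)) : nat :=
  \big[minn/maxrow A]_(i < m) rowsum A i.

Definition idPi m d : {ffun 'I_d -> {perm 'I_m}} := [ffun _ => 1%g].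

(* gamma(A) = min_Pi max_i sum_j A^Pi_{i,j}; seed is the value at Pi = id,
   which is itself in the range, so this is the true minimum. *)
Definition gamma m d (A : 'M[nat]_(m, d)) : nat :=
  \big[minn/maxrow (permcols A (idPi m d))]_(Pi : {ffun 'I_d -> {perm 'I_m}})
     maxrow (permcols A Pi).

Definition beta m d (A : 'M[nat]_(m, d)) : nat :=
  \max_(Pi : {ffun 'I_d -> {perm 'I_m}}) minrow (permcols A Pi).

(* (a, ..., a) with a = (1, ..., N)^T ; row i (0-based) has entry i+1 *)
Definition consec N d : 'M[nat]_(N, d) := \matrix_(i, j) (i.+1 : nat).

Definition complete_consecutive N d (A : 'M[nat]_(N, d)) : Prop :=
  exists Pi : {ffun 'I_d -> {perm 'I_N}}, A = permcols (consec N d) Pi.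

Definition a_d (d k : nat) : nat :=
  d + \sum_(i < d) \sum_(1 <= j < k.+1) i * d ^ (j - 1).

(* Main.v *)
Require Import Defs.
From mathcomp Require Import all_boot all_order all_algebra all_fingroup.
From mathcomp Require Import zify.
Set Implicit Arguments. Unset Strict Implicit. Unset Printing Implicit Defensive.

Fixpoint rot (d j k i : nat) : nat :=
  if k is k'.+1 then (i %% d + j) %% d + d * rot d j k' (i %/ d) else 0.

Lemma rot_lt d j k i : 0 < d -> rot d j k i < d ^ k.
Proof.
move=> d0; elim: k i => [|k IH] i //=.
have h1 := ltn_pmod (i %% d + j) d0.
have h2 := IH (i %/ d).
rewrite expnS.
have : d * (rot d j k (i %/ d)).+1 <= d * d ^ k by rewrite leq_mul2l h2 orbT.
nia.
Qed.

Lemma rot_inj d j k a b : 0 < d -> a < d ^ k -> b < d ^ k ->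
  rot d j k a = rot d j k b -> a = b.
Proof.
move=> d0; elim: k a b => [|k IH] a b /=.
  by rewrite expn0 !ltnS !leqn0 => /eqP -> /eqP ->.
move=> ha hb.
set ca := (a %% d + j) %% d; set cb := (b %% d + j) %% d => E.
have hca : ca < d by apply: ltn_pmod.
have hcb : cb < d by apply: ltn_pmod.
have Ec : ca = cb.
  have := congr1 (modn^~ d) E.
  by rewrite ![_ + d * _]addnC !(mulnC d) !modnMDl !modn_small.
have Er : rot d j k (a %/ d) = rot d j k (b %/ d).
  by move: E; rewrite Ec => /addnI /eqP; rewrite eqn_pmul2l // => /eqP.
have Eq : a %/ d = b %/ d.
  by apply: (IH _ _ _ _ Er); rewrite ltn_divLR // mulnC -expnS.
have Em : a %% d = b %% d.
  move: Ec; rewrite /ca /cb => /eqP.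
  rewrite -!(addnC j) eqn_modDl !modn_mod => /eqP.
  by [].
by rewrite (divn_eq a d) (divn_eq b d) Eq Em.
Qed.

Lemma sum_mod_shift d x (d0 : 0 < d) : \sum_(j < d) (x + j) %% d = \sum_(j < d) j.
Proof.
pose h (j : 'I_d) : 'I_d := Ordinal (ltn_pmod (x + j) d0).
have hinj : injective h.
  move=> a b /(congr1 val) /= /eqP.
  rewrite eqn_modDl !modn_small // => /eqP; exact: val_inj.
by rewrite [RHS](reindex_inj hinj).
Qed.

Definition Tsum d := \sum_(x < d) x.
Definition Ssum d k := \sum_(p < k) d ^ p.

Lemma rot_sum d k i : 0 < d -> \sum_(j < d) rot d j k i = Tsum d * Ssum d k.
Proof.
move=> d0; elim: k i => [|k IH] i /=.
  by rewrite /Ssum big_ord0 muln0 big1.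
rewrite big_split /= sum_mod_shift // -big_distrr /= IH.
rewrite /Ssum big_ord_recl /= expn0.
under [X in _ = _ * (_ + X)]eq_bigr do rewrite expnS.
rewrite -big_distrr /= -/(Tsum d) -/(Ssum d k).
by rewrite mulnDr muln1 mulnCA.
Qed.

Lemma a_dE d k : a_d d k = d + Tsum d * Ssum d k.
Proof.
rewrite /a_d; congr (_ + _).
rewrite /Tsum big_distrl /=; apply: eq_bigr => x _.
rewrite big_add1 /= big_mkord /Ssum big_distrr /=.
by apply: eq_bigr => p _; rewrite subn1.
Qed.

Lemma sumS d (F : 'I_d -> nat) : \sum_(j < d) (F j).+1 = d + \sum_(j < d) F j.
Proof.
under eq_bigr do rewrite -add1n.
by rewrite big_split /= sum_nat_const card_ord muln1.
Qed.

Lemma rank_perm N (f : 'I_N -> nat) : injective f ->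
  exists s : {perm 'I_N}, forall i, s i <= f i.
Proof.
move=> finj.
pose A (i : 'I_N) := [set i' | f i' < f i].
have r_lt i : #|A i| < N.
  rewrite -[N in _ < N]card_ord; apply: proper_card; apply/properP; split.
    by apply/subsetP.
  by exists i => //; rewrite inE ltnn.
have r_le i : #|A i| <= f i.
  rewrite cardE -(size_map f) -(size_iota 0 (f i)).
  apply: uniq_leq_size; first by rewrite map_inj_uniq // enum_uniq.
  move=> v /mapP [i' Hi' ->]; rewrite mem_iota add0n /=.
  by move: Hi'; rewrite mem_enum inE.
have r_mono a b : f a < f b -> #|A a| < #|A b|.
  move=> ab; apply: proper_card; apply/properP; split.
    apply/subsetP => x; rewrite !inE => xa; exact: ltn_trans xa ab.
  by exists a; rewrite !inE ?ltnn.
pose g (i : 'I_N) : 'I_N := insubd i #|A i|.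
have gv i : val (g i) = #|A i| by rewrite val_insubd r_lt.
have ginj : injective g.
  move=> a b /(congr1 val); rewrite !gv => E.
  case: (ltngtP (f a) (f b)) => [h|h|h].
  - by have := r_mono _ _ h; rewrite E ltnn.
  - by have := r_mono _ _ h; rewrite E ltnn.
  - exact: finj.
exists (perm ginj) => i; rewrite permE gv; exact: r_le.
Qed.

Lemma bigmin_le_seq (I : eqType) (r : seq I) (F : I -> nat) x i :
  i \in r -> \big[minn/x]_(j <- r) F j <= F i.
Proof.
elim: r => [|a r IH] //; rewrite inE big_cons => /orP [/eqP ->|/IH h].
  exact: geq_minl.
exact: leq_trans (geq_minr _ _) h.
Qed.

Lemma bigmin_le (I : finType) (F : I -> nat) x i : \big[minn/x]_j F j <= F i.
Proof. by apply: bigmin_le_seq; rewrite mem_index_enum. Qed.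

Section Mat.
Variables (N d : nat).
Implicit Types (X A : 'M[nat]_(N, d)).

Lemma minrow_le X i : minrow X <= rowsum X i.
Proof. exact: bigmin_le. Qed.

Lemma maxrow_ge X i : rowsum X i <= maxrow X.
Proof. exact: leq_bigmax. Qed.

Lemma leq_minrow c X (i0 : 'I_N) : (forall i, c <= rowsum X i) -> c <= minrow X.
Proof.
move=> H; rewrite /minrow; elim/big_ind: _ => //.
- exact: leq_trans (H i0) (maxrow_ge X i0).
- by move=> x y hx hy; rewrite leq_min hx hy.
Qed.

Lemma total_perm X P :
  \sum_(i < N) rowsum (permcols X P) i = \sum_(i < N) rowsum X i.
Proof.
rewrite /rowsum exchange_big [RHS]exchange_big /=; apply: eq_bigr => j _.
rewrite (reindex_inj (@perm_inj _ (P j))) /=.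
by apply: eq_bigr => i _; rewrite mxE -permM mulgV perm1.
Qed.

Lemma config A (hA : complete_consecutive A) (s : 'I_d -> {perm 'I_N}) :
  exists P, forall i, rowsum (permcols A P) i = \sum_(j < d) (s j i).+1.
Proof.
case: hA => P0 ->.
exists [ffun j => ((P0 j)^-1 * (s j)^-1)%g] => i.
rewrite /rowsum; apply: eq_bigr => j _.
by rewrite !mxE ffunE invMg !invgK permM permK.
Qed.
End Mat.

Lemma minrow_maxrow N d (A X Y : 'M[nat]_(N, d)) P Q : 0 < N ->
  X = permcols A P -> Y = permcols A Q -> minrow X <= maxrow Y.
Proof.
move=> N0 -> ->.
rewrite -(leq_pmul2l N0).
apply: (@leq_trans (\sum_(i < N) rowsum (permcols A P) i)).
  rewrite -[X in X * _](card_ord N) -sum_nat_const; apply: leq_sum => i _.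
  exact: minrow_le.
rewrite total_perm -(total_perm A Q).
rewrite -[X in _ <= X * _](card_ord N) -sum_nat_const; apply: leq_sum => i _.
exact: maxrow_ge.
Qed.

Theorem corollary1 (d N : nat) (hd : 2 <= d) (hN : 1 <= N)
    (A : 'M[nat]_(N, d)) (hA : complete_consecutive A) :
  [/\ a_d d (trunc_log d N) <= beta A,
      beta A <= gamma A,
      gamma A <= a_d d (up_log d N)
    & a_d d (up_log d N) - a_d d (trunc_log d N)
        <= \sum_(i < d) i * d ^ (up_log d N - 1)].
Proof.
have d0 : 0 < d by exact: ltnW.
set t := trunc_log d N; set u := up_log d N.
have hM : d ^ t <= N by exact: trunc_logP.
have hU : N <= d ^ u by exact: up_logP.
have i0 : 'I_N := Ordinal hN.
split.
-
  pose fv (j : 'I_d) (i : 'I_N) : nat := if i < d ^ t then rot d j t i else i.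
  have fv_lt j i : fv j i < N.
    rewrite /fv; case: ifP => _ //.
    exact: leq_trans (rot_lt _ _ _ d0) hM.
  pose f j (i : 'I_N) : 'I_N := insubd i (fv j i).
  have fE j i : val (f j i) = fv j i by rewrite val_insubd fv_lt.
  have finj j : injective (f j).
    move=> a b /(congr1 val); rewrite !fE /fv.
    case: ifP => ha; case: ifP => hb.
    + by move/(rot_inj d0 ha hb)/val_inj.
    + move=> E; have := rot_lt j t a d0; rewrite E => h.
      by move: hb; rewrite h.
    + move=> E; have := rot_lt j t b d0; rewrite -E => h.
      by move: ha; rewrite h.
    + exact: val_inj.
  have [P HP] := config hA (fun j => perm (finj j)).
  apply: leq_trans (leq_bigmax P).
  apply: (@leq_minrow _ _ _ _ i0) => i; rewrite HP.
  under eq_bigr do rewrite permE fE.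
  case: (ltnP i (d ^ t)) => hi.
    rewrite /fv; under eq_bigr do rewrite hi.
    by rewrite sumS rot_sum // a_dE.
  rewrite a_dE -(rot_sum t 0 d0) -sumS; apply: leq_sum => j _.
  rewrite /fv (ltnNge i) hi /= ltnS.
  exact: leq_trans (ltnW (rot_lt _ _ _ d0)) hi.
-
  apply/bigmax_leqP => P _.
  rewrite /gamma; elim/big_ind: _.
  + exact: (minrow_maxrow hN erefl erefl).
  + by move=> x y hx hy; rewrite leq_min hx hy.
  + move=> Q _; exact: (minrow_maxrow hN erefl erefl).
-
  have fs (j : 'I_d) : exists s : {perm 'I_N}, forall i, s i <= rot d j u i.
    apply: rank_perm => a b H; apply: val_inj; apply: (rot_inj d0 _ _ H).
    + exact: leq_trans (ltn_ord a) hU.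
    + exact: leq_trans (ltn_ord b) hU.
  have [s Hs] : exists s : 'I_d -> {perm 'I_N}, forall j i, s j i <= rot d j u i.
    exact: fin_all_exists fs.
  have [P HP] := config hA s.
  apply: leq_trans (bigmin_le _ _ P) _.
  apply/bigmax_leqP => i _; rewrite HP a_dE -(rot_sum u i d0) -sumS.
  by apply: leq_sum => j _; rewrite ltnS.
-
  have htu : t <= u by rewrite -(leq_exp2l _ _ hd); exact: leq_trans hM hU.
  have hut : u <= t.+1 by apply: up_log_min => //; exact: ltnW (trunc_log_ltn _ hd).
  have [->|/eqP] := eqVneq u t; first by rewrite subnn.
  move=> ne; have -> : u = t.+1 by lia.
  rewrite !a_dE /Ssum big_ord_recr /= subn1 /= -big_distrl /= -/(Tsum d) -/(Ssum d t).
  by rewrite mulnDr addnA subDnCA // subnn addn0.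
Qed.
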